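(* Let $A,B\in\mathrm{SL}_2\mathbb{Z}$ be noncommuting, well oriented, with $2\le\mathrm{tr}(A)<\mathrm{tr}(B)$. If $[ab]<[b^2]$, then for every $s\ge1$ and $k_1,\dots,k_s\ge1$ we have $[ab^{k_1}ab^{k_2}\cdots ab^{k_s}]<[b^{k_1+\cdots+k_s+s}]$.
   Context: Words are finite strings over $\{a,b\}$; $\phi$ is the homomorphism with $\phi(a)=A,\phi(b)=B$, and $[w]=\mathrm{tr}(\phi(w))$. Fixed points are for the Möbius action on $\partial\mathcal{H}=\mathbb{P}^1\mathbb{R}$; $\alpha^\pm$ ($\beta^\pm$) are the attracting/repelling fixed points of $A$ ($B$), both equal to the unique fixed point if parabolic. With $\partial\mathcal{H}$ cyclically ordered and $[\alpha,\beta]$ the closed counterclockwise interval from $\alpha$ to $\beta$, let $I^+=\{\alpha^+\}$ if $\alpha^+=\beta^+$, and otherwise the one of $[\alpha^+,\beta^+],[\beta^+,\alpha^+]$ mapped into itself by both $A$ and $B$ (if it exists); define $I^-$ likewise with $A^{-1},B^{-1},\alpha^-,\beta^-$. The pair is coherently oriented if both exist, and well oriented if $A,B$ is coherently oriented but $A,B^{-1}$ is not. *)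

(* Defs.v *)
From HB Require Import structures.
From mathcomp Require Import all_boot all_order all_algebra.
From mathcomp Require Import Rstruct.
From Stdlib Require Rdefinitions.
Notation R := Rdefinitions.R.
Set Implicit Arguments. Unset Strict Implicit. Unset Printing Implicit Defensive.
Import Order.TTheory GRing.Theory Num.Theory.
Local Open Scope ring_scope.

Inductive letter := La | Lb.

Definition word := seq letter.

Definition phi (A B : 'M[int]_2) (w : word) : 'M[int]_2 :=
  \prod_(l <- w) (if l is La then A else B).

Definition trw (A B : 'M[int]_2) (w : word) : int := \tr (phi A B w).

Definition SL2Z (A : 'M[int]_2) : Prop := \det A = 1.

(* [None] is the point at infinity. *)
Definition P1 := option R.

Definition ent (M : 'M[int]_2) (i j : 'I_2) : R := (M i j)%:~R.

Definition mob (M : 'M[int]_2) (p : P1) : P1 :=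
  let a := ent M 0 0 in let b := ent M 0 1 in
  let c := ent M 1 0 in let d := ent M 1 1 in
  match p with
  | Some x => if c * x + d == 0 then None else Some ((a * x + b) / (c * x + d))
  | None => if c == 0 then None else Some (a / c)
  end.

(* homogeneous coordinates of a point: Some t ~ (t,1), oo ~ (1,0) *)
Definition hx (p : P1) : R := if p is Some t then t else 1.
Definition hy (p : P1) : R := if p is Some _ then 1 else 0.

Definition eigenpt (M : 'M[int]_2) (lam : R) (p : P1) : Prop :=
  ent M 0 0 * hx p + ent M 0 1 * hy p = lam * hx p /\
  ent M 1 0 * hx p + ent M 1 1 * hy p = lam * hy p.

(* attracting fixed point: eigenline of the eigenvalue of modulus >= 1
   (for hyperbolic M the dominant eigenvalue; for parabolic M the unique
   fixed point); repelling: eigenvalue of modulus <= 1. *)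
Definition attr_fix (M : 'M[int]_2) (p : P1) : Prop :=
  exists lam : R, 1 <= `|lam| /\ eigenpt M lam p.
Definition rep_fix (M : 'M[int]_2) (p : P1) : Prop :=
  exists lam : R, `|lam| <= 1 /\ eigenpt M lam p.

(* Cyclic order on P^1(R): traverse R in increasing direction, then oo.
   [le1] is the linear order with oo as top element. *)
Definition le1 (p q : P1) : bool :=
  match p, q with
  | Some x, Some y => x <= y
  | _, None => true
  | None, Some _ => false
  end.

(* closed counterclockwise interval [p, q] from p to q *)
Definition arc (p q : P1) : P1 -> bool :=
  fun x => if le1 p q then le1 p x && le1 x q else le1 p x || le1 x q.

Definition maps_into_itself (M : 'M[int]_2) (I : P1 -> bool) : Prop :=
  forall x, I x -> I (mob M x).

Definition I_exists (M N : 'M[int]_2) (p q : P1) : Prop :=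
  p = q \/
  exists I, (I = arc p q \/ I = arc q p) /\
            maps_into_itself M I /\ maps_into_itself N I.

Definition coherently_oriented (A B : 'M[int]_2) : Prop :=
  exists ap am bp bm : P1,
    attr_fix A ap /\ rep_fix A am /\ attr_fix B bp /\ rep_fix B bm /\
    I_exists A B ap bp /\ I_exists (invmx A) (invmx B) am bm.

Definition well_oriented (A B : 'M[int]_2) : Prop :=
  coherently_oriented A B /\ ~ coherently_oriented A (invmx B).

Definition ab_word (ks : seq nat) : word :=
  flatten [seq La :: nseq k Lb | k <- ks].

(* Main.v *)
Require Import Defs.
From mathcomp Require Import all_boot all_order all_algebra.
From mathcomp Require Import Rstruct.
From mathcomp.algebra_tactics Require Import ring lra.
Import Order.TTheory GRing.Theory Num.Theory.
Local Open Scope ring_scope.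

Record m2 := M2 { g00 : R; g01 : R; g10 : R; g11 : R }.
Definition mul2 (X Y : m2) : m2 :=
  M2 (g00 X * g00 Y + g01 X * g10 Y) (g00 X * g01 Y + g01 X * g11 Y)
     (g10 X * g00 Y + g11 X * g10 Y) (g10 X * g01 Y + g11 X * g11 Y).
Definition id2 : m2 := M2 1 0 0 1.
Definition tr2 (X : m2) : R := g00 X + g11 X.
Definition det2 (X : m2) : R := g00 X * g11 X - g01 X * g10 X.
Definition adj2 (X : m2) : m2 := M2 (g11 X) (- g01 X) (- g10 X) (g00 X).
Definition flip2 (X : m2) : m2 := M2 (g00 X) (- g01 X) (- g10 X) (g11 X).
Fixpoint wordT (X Y : m2) (w : word) : m2 :=
  match w with
  | [::] => id2
  | l :: w' => mul2 (if l is La then X else Y) (wordT X Y w')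
  end.
Definition hasA (w : word) : bool := has (fun l => if l is La then true else false) w.

Lemma m2_ext (X Y : m2) : g00 X = g00 Y -> g01 X = g01 Y -> g10 X = g10 Y -> g11 X = g11 Y -> X = Y.
Proof. by case: X => ? ? ? ?; case: Y => ? ? ? ? /= -> -> -> ->. Qed.

Lemma mul2A X Y Z : mul2 X (mul2 Y Z) = mul2 (mul2 X Y) Z.
Proof. apply: m2_ext; rewrite /mul2 /=; ring. Qed.
Lemma mul2_id X : mul2 X id2 = X.
Proof. apply: m2_ext; rewrite /mul2 /=; ring. Qed.
Lemma mul2_id_l X : mul2 id2 X = X.
Proof. apply: m2_ext; rewrite /mul2 /=; ring. Qed.
Lemma det2_mul X Y : det2 (mul2 X Y) = det2 X * det2 Y.
Proof. rewrite /det2 /mul2 /=; ring. Qed.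
Lemma adj2_mul X Y : adj2 (mul2 X Y) = mul2 (adj2 Y) (adj2 X).
Proof. apply: m2_ext; rewrite /mul2 /adj2 /=; ring. Qed.
Lemma tr2_adj X : tr2 (adj2 X) = tr2 X.
Proof. rewrite /tr2 /adj2 /=; ring. Qed.
Lemma det2_adj X : det2 (adj2 X) = det2 X.
Proof. rewrite /det2 /adj2 /=; ring. Qed.
Lemma flip2_mul X Y : flip2 (mul2 X Y) = mul2 (flip2 X) (flip2 Y).
Proof. apply: m2_ext; rewrite /mul2 /flip2 /=; ring. Qed.
Lemma tr2_flip X : tr2 (flip2 X) = tr2 X.
Proof. by []. Qed.
Lemma det2_flip X : det2 (flip2 X) = det2 X.
Proof. rewrite /det2 /flip2 /=; ring. Qed.
Lemma tr2C X Y : tr2 (mul2 X Y) = tr2 (mul2 Y X).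
Proof. rewrite /tr2 /mul2 /=; ring. Qed.

Lemma wordT_cat X Y w1 w2 : wordT X Y (w1 ++ w2) = mul2 (wordT X Y w1) (wordT X Y w2).
Proof.
elim: w1 => [|l w1 IH] /=; first by rewrite mul2_id_l.
by rewrite IH mul2A.
Qed.

Lemma wordT_adj X Y w : adj2 (wordT X Y w) = wordT (adj2 X) (adj2 Y) (rev w).
Proof.
elim: w => [|l w IH] /=.
  by apply: m2_ext; rewrite /adj2 /= ?oppr0.
rewrite adj2_mul IH rev_cons -cats1 wordT_cat /=; rewrite mul2_id.
by case: l.
Qed.

Lemma wordT_flip X Y w : flip2 (wordT X Y w) = wordT (flip2 X) (flip2 Y) w.
Proof.
elim: w => [|l w IH] /=.
  by apply: m2_ext; rewrite /flip2 /= ?oppr0.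
by rewrite flip2_mul IH; case: l.
Qed.

Lemma wordT_det X Y w : det2 X = 1 -> det2 Y = 1 -> det2 (wordT X Y w) = 1.
Proof.
move=> hX hY; elim: w => [|l w IH] /=; first by rewrite /det2 /=; ring.
by rewrite det2_mul IH; case: l; rewrite ?hX ?hY mulr1.
Qed.


Definition nonneg (X : m2) := 0 <= g00 X /\ 0 <= g01 X /\ 0 <= g10 X /\ 0 <= g11 X.

Lemma colstep (h1 h2 f1 f2 w0 w1 b r F : R) : 0 <= w0 -> 0 <= w1 -> 0 < b ->
  h1 <= b * f1 -> h2 <= b * f2 -> f1 * w0 + f2 * w1 <= r * F ->
  h1 * w0 + h2 * w1 <= b * r * F.
Proof.
move=> h0 h1' hb e1 e2 e3.
have : h1 * w0 <= b * f1 * w0 by apply: ler_wpM2r.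
have : h2 * w1 <= b * f2 * w1 by apply: ler_wpM2r.
have : b * (f1 * w0 + f2 * w1) <= b * (r * F) by apply: ler_wpM2l => //; lra.
lra.
Qed.

Lemma colstep_s1 (h1 h2 f1 f2 w0 w1 b r F : R) : 0 <= w0 -> 0 <= w1 -> 0 < b ->
  h1 <= b * f1 -> h2 <= b * f2 -> f1 * w0 + f2 * w1 < r * F ->
  h1 * w0 + h2 * w1 < b * r * F.
Proof.
move=> h0 h1' hb e1 e2 e3.
have : h1 * w0 <= b * f1 * w0 by apply: ler_wpM2r.
have : h2 * w1 <= b * f2 * w1 by apply: ler_wpM2r.
have : b * (f1 * w0 + f2 * w1) < b * (r * F) by rewrite ltr_pM2l.
lra.
Qed.

Lemma colstep_s2 (h1 h2 f1 f2 w0 w1 b r F : R) : 0 <= w0 -> 0 <= w1 -> 0 < w0 + w1 -> 0 < b ->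
  h1 < b * f1 -> h2 < b * f2 -> f1 * w0 + f2 * w1 <= r * F ->
  h1 * w0 + h2 * w1 < b * r * F.
Proof.
move=> h0 h1' hs hb e1 e2 e3.
have : b * (f1 * w0 + f2 * w1) <= b * (r * F) by apply: ler_wpM2l => //; lra.
have : h1 * w0 + h2 * w1 < b * f1 * w0 + b * f2 * w1.
  have [w0p|w0z] := ltrP 0 w0.
    have : h1 * w0 < b * f1 * w0 by rewrite ltr_pM2r.
    have : h2 * w1 <= b * f2 * w1 by apply: ler_wpM2r => //; lra.
    lra.
  have w0e : w0 = 0 by lra.
  have w1p : 0 < w1 by lra.
  have : h2 * w1 < b * f2 * w1 by rewrite ltr_pM2r.
  rewrite w0e; lra.
lra.
Qed.

Lemma col_pos (W : m2) : nonneg W -> det2 W = 1 ->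
  0 < g00 W + g10 W /\ 0 < g01 W + g11 W.
Proof.
case=> [h00 [h01 [h10 h11]]]; rewrite /det2 => hd; split.
  have [//|hle] := ltrP 0 (g00 W + g10 W).
  have e0 : g00 W = 0 by lra. have e1 : g10 W = 0 by lra.
  move: hd; rewrite e0 e1; lra.
have [//|hle] := ltrP 0 (g01 W + g11 W).
have e0 : g01 W = 0 by lra. have e1 : g11 W = 0 by lra.
move: hd; rewrite e0 e1; lra.
Qed.

Lemma nonneg_mul X Y : nonneg X -> nonneg Y -> nonneg (mul2 X Y).
Proof.
case=> [a0 [a1 [a2 a3]]] [b0 [b1 [b2 b3]]]; rewrite /nonneg /mul2 /=.
split; [|split; [|split]]; apply: addr_ge0; apply: mulr_ge0 => //.
Qed.

Definition Inv (b f1 f2 : R) (n : nat) (W : m2) (strict : bool) :=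
   nonneg W /\ det2 W = 1 /\
   f1 * g00 W + f2 * g10 W <= b ^+ n * f1 /\
   f1 * g01 W + f2 * g11 W <= b ^+ n * f2 /\
   (strict ->
   f1 * g00 W + f2 * g10 W < b ^+ n * f1 /\
   f1 * g01 W + f2 * g11 W < b ^+ n * f2).

Lemma step (L W : m2) (b f1 f2 : R) (n : nat) (sL sW : bool) :
  0 < b -> nonneg L -> det2 L = 1 ->
  f1 * g00 L + f2 * g10 L <= b * f1 -> f1 * g01 L + f2 * g11 L <= b * f2 ->
  (sL -> f1 * g00 L + f2 * g10 L < b * f1 /\ f1 * g01 L + f2 * g11 L < b * f2) ->
  Inv b f1 f2 n W sW -> Inv b f1 f2 n.+1 (mul2 L W) (sL || sW).
Proof.
move=> hb nL dL l1 l2 ls [nW [dW [c1 [c2 cs]]]].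
have [p0 p1] := col_pos _ nW dW.
case: (nW) => [w00 [w01 [w10 w11]]].
have E1 : f1 * g00 (mul2 L W) + f2 * g10 (mul2 L W) =
  (f1 * g00 L + f2 * g10 L) * g00 W + (f1 * g01 L + f2 * g11 L) * g10 W.
  rewrite /mul2 /=; ring.
have E2 : f1 * g01 (mul2 L W) + f2 * g11 (mul2 L W) =
  (f1 * g00 L + f2 * g10 L) * g01 W + (f1 * g01 L + f2 * g11 L) * g11 W.
  rewrite /mul2 /=; ring.
rewrite /Inv exprS.
split; first by apply: nonneg_mul.
split; first by rewrite det2_mul dL dW mulr1.
rewrite E1 E2.
split; first by apply: (colstep _ _ f1 f2).
split; first by apply: (colstep _ _ f1 f2).
case/orP=> [hs|hs].
  have [l1s l2s] := ls hs.
  by split; apply: (colstep_s2 _ _ f1 f2).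
have [s1 s2] := cs hs.
by split; apply: (colstep_s1 _ _ f1 f2).
Qed.

Lemma inv_core (NA NB : m2) (b f1 f2 : R) :
  0 < b -> 0 < f1 -> 0 < f2 ->
  nonneg NA -> nonneg NB -> det2 NA = 1 -> det2 NB = 1 ->
  f1 * g00 NA + f2 * g10 NA < b * f1 -> f1 * g01 NA + f2 * g11 NA < b * f2 ->
  f1 * g00 NB + f2 * g10 NB <= b * f1 -> f1 * g01 NB + f2 * g11 NB <= b * f2 ->
  forall w, Inv b f1 f2 (size w) (wordT NA NB w) (hasA w).
Proof.
move=> hb hf1 hf2 nA nB dA dB a1 a2 b1 b2.
elim=> [|l w IH].
  rewrite /Inv /= expr0 !mul1r; split; first by rewrite /nonneg /= ler01 lexx.
  by split; [rewrite /det2 /=; ring | split; lra].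
case: l.
  have -> : hasA (La :: w) = true || hasA w by [].
  apply: step => //; lra.
have -> : hasA (Lb :: w) = false || hasA w by [].
by apply: step.
Qed.

Lemma final_ineq (W : m2) (f1 f2 r : R) : nonneg W -> det2 W = 1 -> 0 < f1 -> 0 < f2 -> 0 < r ->
  f1 * g00 W + f2 * g10 W < r * f1 -> f1 * g01 W + f2 * g11 W < r * f2 ->
  r * tr2 W < r ^+ 2 + 1.
Proof.
case=> [w00 [w01 [w10 w11]]]; rewrite /det2 /tr2 => hd hf1 hf2 hr e1 e2.
have ha : f2 * g10 W < f1 * (r - g00 W) by lra.
have hb : f1 * g01 W < f2 * (r - g11 W) by lra.
have ha0 : 0 <= f2 * g10 W by apply: mulr_ge0; lra.
have hb0 : 0 <= f1 * g01 W by apply: mulr_ge0; lra.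
have hprod : (f2 * g10 W) * (f1 * g01 W) < (f1 * (r - g00 W)) * (f2 * (r - g11 W)).
  apply: (le_lt_trans (y := (f2 * g10 W) * (f2 * (r - g11 W)))).
    by apply: ler_wpM2l => //; lra.
  rewrite ltr_pM2r //; lra.
have hf : 0 < f1 * f2 by apply: mulr_gt0.
have : 0 < (f1 * f2) * ((r - g00 W) * (r - g11 W) - g01 W * g10 W).
  have -> : (f1 * f2) * ((r - g00 W) * (r - g11 W) - g01 W * g10 W) =
     (f1 * (r - g00 W)) * (f2 * (r - g11 W)) - (f2 * g10 W) * (f1 * g01 W) by ring.
  lra.
rewrite pmulr_rgt0 //.
have -> : (r - g00 W) * (r - g11 W) - g01 W * g10 W = r ^+ 2 - r * (g00 W + g11 W) + (g00 W * g11 W - g01 W * g10 W) by ring.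
rewrite hd; lra.
Qed.

Lemma nseq_word NA NB n : g01 NB = 0 ->
  g01 (wordT NA NB (nseq n Lb)) = 0 /\ g00 (wordT NA NB (nseq n Lb)) = g00 NB ^+ n /\
  g11 (wordT NA NB (nseq n Lb)) = g11 NB ^+ n.
Proof.
move=> h; elim: n => [|n [e1 [e2 e3]]] /=; first by rewrite !expr0.
rewrite /mul2 /= e1 e2 e3 h !exprS; split; [ring | split; ring].
Qed.

Lemma core (NA NB : m2) :
  g10 NA = 0 -> g01 NB = 0 -> det2 NA = 1 -> det2 NB = 1 ->
  0 <= g01 NA -> 0 <= g10 NB -> 1 <= g11 NB -> 0 < g00 NA ->
  2 <= tr2 NA -> tr2 NA < tr2 NB -> tr2 (mul2 NA NB) <= tr2 NB ^+ 2 - 3 ->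
  forall w, hasA w -> tr2 (wordT NA NB w) < tr2 (wordT NA NB (nseq (size w) Lb)).
Proof.
move=> hA10 hB01 dA dB hx ht hb ha trA trAB hc w hw.
have hc' : g00 NA * g00 NB + g01 NA * g10 NB + g11 NA * g11 NB <= (g00 NB + g11 NB) ^+ 2 - 3.
  by move: hc; rewrite /tr2 /mul2 /= hA10 hB01 mul0r add0r.
move: dA dB trA trAB hc' hx ht hb ha; clear hc.
rewrite /det2 /tr2 hA10 hB01 ?mulr0 ?mul0r ?subr0.
case E: NA => [al x z0 z]; case F: NB => [s z1 t be] /=.
move=> dA dB trA trAB hc hx ht hb ha.
have ez0 : z0 = 0 by rewrite -hA10 E.
have ez1 : z1 = 0 by rewrite -hB01 F.
subst z0 z1.
have hz : 0 < z by nra.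
have hs : 0 < s by nra.
have hbe1 : 1 < be.
  have [//|hle] := ltrP 1 be.
  have e : be = 1 by lra.
  move: dB trAB; rewrite e mulr1 => ->; lra.
have hs1 : s < 1 by nra.
have hal : al < be.
  have [//|hle] := ltrP al be.
  have hzs : z * s <= 1.
    have : 1 <= al * be by nra.
    have : (z * s) * (al * be) = 1 by rewrite -[RHS]mul1r -{1}dA -{1}dB; ring.
    nra.
  have : al + z - be - s = (al - be) * (1 - z * s).
    have -> : (al - be) * (1 - z * s) = al - (al * z) * s - be + (s * be) * z by ring.
    rewrite dA dB; ring.
  nra.
have hzb : z < be.
  have [//|hle] := ltrP z be.
  have has : al * s <= 1.
    have : 1 <= z * be by nra.
    have : (al * s) * (z * be) = 1 by rewrite -[RHS]mul1r -{1}dA -{1}dB; ring.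
    nra.
  have : al + z - be - s = (z - be) * (1 - al * s).
    have -> : (z - be) * (1 - al * s) = z - (al * z) * s - be + (s * be) * al by ring.
    rewrite dA dB; ring.
  nra.
have [f1 [f2 [hf1 [hf2 [a1 [a2 [b1 b2]]]]]]] : exists f1 f2 : R, 0 < f1 /\ 0 < f2 /\
   f1 * al + f2 * 0 < be * f1 /\ f1 * x + f2 * z < be * f2 /\
   f1 * s + f2 * t <= be * f1 /\ f1 * 0 + f2 * be <= be * f2.
  have [htp|ht0] := ltrP 0 t.
    exists t, (be - s); split => //; split; first lra.
    split; first nra.
    split; last (split; nra).
    have : s * (s + be) < s * (al + z) + 1 by nra.
    nra.
  have e : t = 0 by lra.
  exists (be - z), (x + be - z); split; first lra; split; first lra.
  split; first nra.
  split; last (split; rewrite ?e; nra).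
  have : 0 < (be - z) * (be - z) by nra.
  nra.
have nA : nonneg (M2 al x 0 z) by rewrite /nonneg /=; lra.
have nB : nonneg (M2 s 0 t be) by rewrite /nonneg /=; lra.
have dA' : det2 (M2 al x 0 z) = 1 by rewrite /det2 /= mulr0 subr0.
have dB' : det2 (M2 s 0 t be) = 1 by rewrite /det2 /= mul0r subr0.
have hbe : 0 < be by lra.
have := inv_core (M2 al x 0 z) (M2 s 0 t be) be f1 f2 hbe hf1 hf2 nA nB dA' dB' a1 a2 b1 b2 w.
case=> [nW [dW [_ [_ cs]]]].
have [s1 s2] := cs hw.
have hr : 0 < be ^+ size w by apply: exprn_gt0.
have := @final_ineq _ f1 f2 _ nW dW hf1 hf2 hr s1 s2.
have [_ [e2 e3]] := nseq_word (M2 al x 0 z) (M2 s 0 t be) (size w) (erefl _).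
rewrite /tr2 e2 e3 /=.
set W := wordT _ _ w.
set r := be ^+ size w.
have hsr : s ^+ size w * r = 1 by rewrite /r -exprMn dB expr1n.
move=> hfin.
have : r * (s ^+ size w + r - (g00 W + g11 W)) > 0.
  have -> : r * (s ^+ size w + r - (g00 W + g11 W)) = s ^+ size w * r + r ^+ 2 - r * (g00 W + g11 W) by ring.
  rewrite hsr; lra.
rewrite pmulr_rgt0 //; lra.
Qed.

Definition pt (X Y : R) : P1 := if Y == 0 then None else Some (X / Y).
Definition mobT (M : m2) (p : P1) : P1 :=
  pt (g00 M * hx p + g01 M * hy p) (g10 M * hx p + g11 M * hy p).
Definition eigT (M : m2) (lam : R) (p : P1) :=
  g00 M * hx p + g01 M * hy p = lam * hx p /\ g10 M * hx p + g11 M * hy p = lam * hy p.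
Definition dP (p q : P1) := hx p * hy q - hy p * hx q.

Lemma dP_neq p q : p <> q -> dP p q != 0.
Proof.
case: p => [x|]; case: q => [y|] //= hn; rewrite /dP /= ?mulr1 ?mulr0 ?mul1r ?mul0r.
- rewrite subr_eq0; apply/eqP => e; apply: hn; by rewrite e.
- by rewrite sub0r oppr_eq0 oner_eq0.
- by rewrite subr0 oner_eq0.
Qed.

Lemma le1_refl p : le1 p p.
Proof. by case: p => [x|] //=; rewrite lexx. Qed.
Lemma arc_l p q : Defs.arc p q p.
Proof. by rewrite /Defs.arc le1_refl; case: ifP => ->. Qed.
Lemma arc_r p q : Defs.arc p q q.
Proof. by rewrite /Defs.arc le1_refl; case: ifP => -> //; rewrite orbT. Qed.

Lemma sq_pos (a : R) : a != 0 -> 0 < a * a.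
Proof. by move=> h; rewrite lt0r mulf_neq0 //= -expr2 sqr_ge0. Qed.

Lemma bary (x y s t : R) : s + t != 0 ->
  ((s * x + t * y) / (s + t) - x) * (y - (s * x + t * y) / (s + t)) * ((s + t) * (s + t))
  = (s * t) * ((y - x) * (y - x)).
Proof. move=> h; field. exact h. Qed.

Lemma sum_nz (s t : R) : 0 < s * t -> s + t != 0.
Proof. move=> h; apply/eqP => e; have e' : t = - s by lra. move: h; rewrite e'; nra. Qed.

Lemma arcG (p q : P1) (s1 t1 s2 t2 : R) : p <> q -> 0 < s1 * t1 -> s2 * t2 < 0 ->
  Defs.arc p q (pt (s1 * hx p + t1 * hx q) (s1 * hy p + t1 * hy q)) ->
  Defs.arc p q (pt (s2 * hx p + t2 * hx q) (s2 * hy p + t2 * hy q)) -> False.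
Proof.
case: p => [x|]; case: q => [y|] //= hn h1 h2; rewrite ?mulr1 ?mulr0 ?addr0 ?add0r.
- have hxy : y - x != 0 by rewrite subr_eq0; apply/eqP => e; apply: hn; rewrite e.
  clear hn.
  have hyx : 0 < (y - x) * (y - x) by exact: sq_pos.
  have d1 := sum_nz _ _ h1.
  rewrite /pt (negbTE d1).
  set z1 := (s1 * x + t1 * y) / (s1 + t1).
  have B1 := bary x y _ _ d1.
  have hd1 : 0 < (s1 + t1) * (s1 + t1) by exact: sq_pos.
  have Q1 : 0 < (z1 - x) * (y - z1).
    have : 0 < (z1 - x) * (y - z1) * ((s1 + t1) * (s1 + t1)) by rewrite B1; apply: mulr_gt0.
    by rewrite pmulr_lgt0.
  rewrite /Defs.arc /=; case: ifP => hle.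
    move=> _; case: eqP => [_|/eqP d2] /=; first by [].
    set z2 := (s2 * x + t2 * y) / (s2 + t2).
    have B2 := bary x y _ _ d2.
    have hd2 : 0 < (s2 + t2) * (s2 + t2) by exact: sq_pos.
    have Q2 : (z2 - x) * (y - z2) < 0.
      have : (z2 - x) * (y - z2) * ((s2 + t2) * (s2 + t2)) < 0.
        by rewrite B2 pmulr_llt0.
      by rewrite pmulr_llt0.
    case/andP => c1 c2; nra.
  move=> /orP [c|c] _; nra.
- rewrite /pt.
  have hs : s1 != 0 by apply/eqP => e; move: h1; rewrite e mul0r ltxx.
  have hs2 : s2 != 0 by apply/eqP => e; move: h2; rewrite e mul0r ltxx.
  rewrite (negbTE hs2) /Defs.arc /= andbT => _.
  have : ((s2 * x + t2) / s2 - x) * (s2 * s2) = s2 * t2 by field.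
  have hq : 0 < s2 * s2 by exact: sq_pos.
  move=> e c.
  have : 0 <= ((s2 * x + t2) / s2 - x) * (s2 * s2) by apply: mulr_ge0; lra.
  rewrite e; lra.
- rewrite /pt.
  have ht : t1 != 0 by apply/eqP => e; move: h1; rewrite e mulr0 ltxx.
  rewrite (negbTE ht) /Defs.arc /= => c _.
  have : ((s1 + t1 * y) / t1 - y) * (t1 * t1) = s1 * t1 by field.
  have hq : 0 < t1 * t1 by exact: sq_pos.
  move=> e.
  have : ((s1 + t1 * y) / t1 - y) * (t1 * t1) <= 0 by apply: mulr_le0_ge0; lra.
  rewrite e; lra.
Qed.

Section Conj.
Variables (p q : P1).
Hypothesis hpq : p <> q.
Let D := dP p q.
Let hD : D != 0 := dP_neq _ _ hpq.
Definition Pm := M2 (hx p) (hx q) (hy p) (hy q).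
Definition Pinv := M2 (hy q / dP p q) (- hx q / dP p q) (- hy p / dP p q) (hx p / dP p q).
Definition conjN (M : m2) := mul2 Pinv (mul2 M Pm).

Lemma PPinv : mul2 Pm Pinv = id2.
Proof. have h : hx p * hy q - hy p * hx q != 0 := hD; rewrite /Pinv /dP; apply: m2_ext; rewrite /mul2 /=; field; exact h. Qed.

Lemma conj_mul X Y : conjN (mul2 X Y) = mul2 (conjN X) (conjN Y).
Proof.
rewrite /conjN -!mul2A (mul2A Pm) PPinv mul2_id_l.
by rewrite !mul2A.
Qed.

Lemma conj_id : conjN id2 = id2.
Proof. by rewrite /conjN mul2_id_l; have h : hx p * hy q - hy p * hx q != 0 := hD; rewrite /Pinv /dP; apply: m2_ext; rewrite /mul2 /=; field; exact h. Qed.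

Lemma conj_tr M : tr2 (conjN M) = tr2 M.
Proof. rewrite /conjN tr2C -mul2A PPinv mul2_id. done. Qed.

Lemma conj_det M : det2 (conjN M) = det2 M.
Proof.
rewrite /conjN !det2_mul.
have : det2 Pinv * det2 Pm = 1.
  by rewrite -det2_mul; have h : hx p * hy q - hy p * hx q != 0 := hD; rewrite /Pinv /dP; rewrite /det2 /mul2 /=; field; exact h.
move=> e; rewrite mulrCA e mulr1; done.
Qed.

Lemma conj_word X Y w : wordT (conjN X) (conjN Y) w = conjN (wordT X Y w).
Proof.
elim: w => [|l w IH] /=; first by rewrite conj_id.
by rewrite IH conj_mul; case: l.
Qed.

Lemma P_conj M : mul2 Pm (conjN M) = mul2 M Pm.
Proof. by rewrite /conjN mul2A PPinv mul2_id_l. Qed.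

Lemma mob_conj0 M : mobT M p =
  pt (g00 (conjN M) * hx p + g10 (conjN M) * hx q) (g00 (conjN M) * hy p + g10 (conjN M) * hy q).
Proof.
have e := P_conj M; set N := conjN M in e *; clearbody N.
have e1 := congr1 g00 e; have e2 := congr1 g10 e.
rewrite /mul2 /Pm /= in e1 e2; rewrite /mobT -e1 -e2; congr pt; ring.
Qed.

Lemma mob_conj1 M : mobT M q =
  pt (g01 (conjN M) * hx p + g11 (conjN M) * hx q) (g01 (conjN M) * hy p + g11 (conjN M) * hy q).
Proof.
have e := P_conj M; set N := conjN M in e *; clearbody N.
have e1 := congr1 g01 e; have e2 := congr1 g11 e.
rewrite /mul2 /Pm /= in e1 e2; rewrite /mobT -e1 -e2; congr pt; ring.
Qed.

Lemma conj_eig0 M al : eigT M al p -> g10 (conjN M) = 0 /\ g00 (conjN M) = al.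
Proof.
case=> e1 e2; have h : hx p * hy q - hy p * hx q != 0 := hD.
rewrite /conjN /mul2 /Pinv /Pm /dP /= e1 e2; split; field; exact h.
Qed.

Lemma conj_eig1 M be : eigT M be q -> g01 (conjN M) = 0 /\ g11 (conjN M) = be.
Proof.
case=> e1 e2; have h : hx p * hy q - hy p * hx q != 0 := hD.
rewrite /conjN /mul2 /Pinv /Pm /dP /= e1 e2; split; field; exact h.
Qed.

End Conj.

Lemma arcI (I : P1 -> bool) p q s1 t1 s2 t2 : (I = Defs.arc p q \/ I = Defs.arc q p) -> p <> q ->
  0 < s1 * t1 -> s2 * t2 < 0 ->
  I (pt (s1 * hx p + t1 * hx q) (s1 * hy p + t1 * hy q)) ->
  I (pt (s2 * hx p + t2 * hx q) (s2 * hy p + t2 * hy q)) -> False.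
Proof.
case=> -> hpq h1 h2; first exact: arcG.
rewrite (addrC (s1 * hx p)) (addrC (s1 * hy p)) (addrC (s2 * hx p)) (addrC (s2 * hy p)).
apply: (arcG q p t1 s1 t2 s2).
- by move=> e; apply: hpq.
- by rewrite mulrC.
- by rewrite mulrC.
Qed.

Lemma NF (X Y : m2) (p q : P1) (al be : R) (I : P1 -> bool) :
  p <> q -> det2 X = 1 -> det2 Y = 1 -> eigT X al p -> eigT Y be q -> 0 < al -> 1 <= be ->
  (I = Defs.arc p q \/ I = Defs.arc q p) ->
  (forall x, I x -> I (mobT X x)) -> (forall x, I x -> I (mobT Y x)) ->
  2 <= tr2 X -> tr2 X < tr2 Y -> tr2 (mul2 X Y) <= tr2 Y ^+ 2 - 3 ->
  forall w, hasA w -> tr2 (wordT X Y w) < tr2 (wordT X Y (nseq (size w) Lb)).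
Proof.
move=> hpq dX dY eX eY hal hbe hI iX iY trX trXY hc w hw.
have [a10 a00] := conj_eig0 _ _ hpq _ _ eX.
have [b01 b11] := conj_eig1 _ _ hpq _ _ eY.
set NA := conjN p q X in a10 a00 *.
set NB := conjN p q Y in b01 b11 *.
have dA : det2 NA = 1 by rewrite /NA (conj_det _ _ hpq).
have dB : det2 NB = 1 by rewrite /NB (conj_det _ _ hpq).
have hs : g00 NB * be = 1 by move: dB; rewrite /det2 b01 b11 mul0r subr0.
have hz : al * g11 NA = 1 by move: dA; rewrite /det2 a10 a00 mulr0 subr0.
have sp : 0 < g00 NB by nra.
have zp : 0 < g11 NA by nra.
have Ip : I p by case: hI => ->; [apply: arc_l | apply: arc_r].
have Iq : I q by case: hI => ->; [apply: arc_r | apply: arc_l].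
have I1 := iY _ Ip; rewrite (mob_conj0 _ _ hpq) -/NB in I1.
have I2 := iX _ Iq; rewrite (mob_conj1 _ _ hpq) -/NA in I2.
have sgn : 0 <= g10 NB * g01 NA.
  have [//|hneg] := leP 0 (g10 NB * g01 NA).
  have [hpos|hnp] := ltrP 0 (g10 NB).
    have hx' : g01 NA < 0 by nra.
    exfalso; apply: (arcI _ _ _ (g00 NB) (g10 NB) (g01 NA) (g11 NA) hI hpq) => //.
      by apply: mulr_gt0.
    by rewrite pmulr_llt0.
  have hneg' : g10 NB < 0.
    have [//|h0] := ltrP (g10 NB) 0.
    have e : g10 NB = 0 by lra.
    by move: hneg; rewrite e mul0r ltxx.
  have hx' : 0 < g01 NA by nra.
  exfalso; apply: (arcI _ _ _ (g01 NA) (g11 NA) (g00 NB) (g10 NB) hI hpq) => //.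
    by apply: mulr_gt0.
  by rewrite pmulr_rlt0.
have trA : tr2 NA = tr2 X by rewrite /NA (conj_tr _ _ hpq).
have trB : tr2 NB = tr2 Y by rewrite /NB (conj_tr _ _ hpq).
have trAB : tr2 (mul2 NA NB) = tr2 (mul2 X Y) by rewrite /NA /NB -(conj_mul _ _ hpq) (conj_tr _ _ hpq).
have tw : forall v, tr2 (wordT X Y v) = tr2 (wordT NA NB v) by move=> v; rewrite /NA /NB (conj_word _ _ hpq) (conj_tr _ _ hpq).
clearbody NA NB.
rewrite !tw.
have [[h1 h2]|[h1 h2]] : (0 <= g01 NA /\ 0 <= g10 NB) \/ (g01 NA <= 0 /\ g10 NB <= 0).
  clear tw I1 I2 iX iY hI Ip Iq trA trB trAB hpq.
  have [h1|h1] := lerP 0 (g01 NA).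
    have [h2|h2] := lerP 0 (g10 NB); first by left.
    right; split => //; last lra.
    have [h3|h3] := lerP (g01 NA) 0; first done.
    nra.
  right; split; first lra.
  have [h3|h3] := lerP (g10 NB) 0; first done.
  nra.
apply: core => //.
- by rewrite b11.
- by rewrite a00.
- by rewrite trA.
- by rewrite trA trB.
- by rewrite trAB trB.
have tf : forall v, tr2 (wordT NA NB v) = tr2 (wordT (flip2 NA) (flip2 NB) v).
  by move=> v; rewrite -wordT_flip tr2_flip.
rewrite !tf.
apply: core.
- by rewrite /= a10 oppr0.
- by rewrite /= b01 oppr0.
- by rewrite det2_flip.
- by rewrite det2_flip.
- rewrite /=; lra.
- rewrite /=; lra.
- by rewrite /= b11.
- by rewrite /= a00.
- by rewrite tr2_flip trA.
- by rewrite !tr2_flip trA trB.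
- by rewrite -flip2_mul !tr2_flip trAB trB.
- exact: hw.
Qed.

Lemma eig_char M l p : det2 M = 1 -> eigT M l p -> l ^+ 2 - tr2 M * l + 1 = 0.
Proof.
rewrite /eigT /det2 /tr2; case: p => [x|] /=; rewrite ?mulr1 ?mulr0 ?addr0 => dM [e1 e2].
  have h01 : g01 M = (l - g00 M) * x by rewrite mulrBl -e1; ring.
  have h11 : g11 M = l - g10 M * x by lra.
  rewrite h01 h11 in dM *; rewrite -dM; ring.
have h00 : g00 M = l by [].
rewrite -e2 -dM h00 e2; ring.
Qed.

Lemma eig_pos M l p : det2 M = 1 -> eigT M l p -> 0 < tr2 M -> 0 < l.
Proof.
move=> dM e ht; have := eig_char _ _ _ dM e => c.
have [//|hle] := ltrP 0 l.
have : 0 <= l ^+ 2 by apply: sqr_ge0.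
have : 0 <= - (tr2 M * l) by rewrite -mulrN; apply: mulr_ge0; lra.
lra.
Qed.

Lemma eig_same M l1 l2 p : eigT M l1 p -> eigT M l2 p -> l1 = l2.
Proof.
rewrite /eigT; case: p => [x|] /=; rewrite ?mulr1 ?mulr0 ?addr0 => [[a1 b1] [a2 b2]]; lra.
Qed.

Lemma eig_adj M l p : det2 M = 1 -> eigT M l p -> l != 0 -> eigT (adj2 M) l^-1 p.
Proof.
move=> dM [e1 e2] hl; rewrite /eigT /adj2 /=; split; apply: (mulfI hl); rewrite mulrA mulfV // mul1r.
  have -> : l * (g11 M * hx p + - g01 M * hy p) = g11 M * (l * hx p) - g01 M * (l * hy p) by ring.
  rewrite -e1 -e2; move: dM; rewrite /det2 => dM.
  transitivity ((g00 M * g11 M - g01 M * g10 M) * hx p); first ring.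
  by rewrite dM mul1r.
have -> : l * (- g10 M * hx p + g00 M * hy p) = - g10 M * (l * hx p) + g00 M * (l * hy p) by ring.
rewrite -e1 -e2; move: dM; rewrite /det2 => dM.
transitivity ((g00 M * g11 M - g01 M * g10 M) * hy p); first ring.
by rewrite dM mul1r.
Qed.

Lemma eig_mul X Y a b p : eigT X a p -> eigT Y b p -> eigT (mul2 X Y) (a * b) p.
Proof.
move=> [x1 x2] [y1 y2]; rewrite /eigT /mul2 /=; split.
  have -> : (g00 X * g00 Y + g01 X * g10 Y) * hx p + (g00 X * g01 Y + g01 X * g11 Y) * hy p
    = g00 X * (g00 Y * hx p + g01 Y * hy p) + g01 X * (g10 Y * hx p + g11 Y * hy p) by ring.
  rewrite y1 y2.
  have -> : g00 X * (b * hx p) + g01 X * (b * hy p) = b * (g00 X * hx p + g01 X * hy p) by ring.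
  rewrite x1; ring.
have -> : (g10 X * g00 Y + g11 X * g10 Y) * hx p + (g10 X * g01 Y + g11 X * g11 Y) * hy p
  = g10 X * (g00 Y * hx p + g01 Y * hy p) + g11 X * (g10 Y * hx p + g11 Y * hy p) by ring.
rewrite y1 y2.
have -> : g10 X * (b * hx p) + g11 X * (b * hy p) = b * (g10 X * hx p + g11 X * hy p) by ring.
rewrite x2; ring.
Qed.

Lemma row0 (c0 c1 : R) p q : p <> q -> c0 * hx p + c1 * hy p = 0 -> c0 * hx q + c1 * hy q = 0 ->
  c0 = 0 /\ c1 = 0.
Proof.
move=> hpq e1 e2; have hD := dP_neq _ _ hpq.
have E0 : c0 * dP p q = hy q * (c0 * hx p + c1 * hy p) - hy p * (c0 * hx q + c1 * hy q) by rewrite /dP; ring.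
have E1 : c1 * dP p q = hx p * (c0 * hx q + c1 * hy q) - hx q * (c0 * hx p + c1 * hy p) by rewrite /dP; ring.
rewrite e1 e2 !mulr0 subr0 in E0 E1.
split.
  by apply/eqP; move: (E0) => /eqP; rewrite mulf_eq0 (negbTE hD) orbF.
by apply/eqP; move: (E1) => /eqP; rewrite mulf_eq0 (negbTE hD) orbF.
Qed.

Lemma eig_agree Z W l m p q : p <> q -> eigT Z l p -> eigT W l p -> eigT Z m q -> eigT W m q -> Z = W.
Proof.
move=> hpq [z1 z2] [w1 w2] [z3 z4] [w3 w4].
have [r0 r1] : g00 Z - g00 W = 0 /\ g01 Z - g01 W = 0.
  apply: row0 hpq _ _.
    have -> : (g00 Z - g00 W) * hx p + (g01 Z - g01 W) * hy p = (g00 Z * hx p + g01 Z * hy p) - (g00 W * hx p + g01 W * hy p) by ring.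
    by rewrite z1 w1 subrr.
  have -> : (g00 Z - g00 W) * hx q + (g01 Z - g01 W) * hy q = (g00 Z * hx q + g01 Z * hy q) - (g00 W * hx q + g01 W * hy q) by ring.
  by rewrite z3 w3 subrr.
have [r2 r3] : g10 Z - g10 W = 0 /\ g11 Z - g11 W = 0.
  apply: row0 hpq _ _.
    have -> : (g10 Z - g10 W) * hx p + (g11 Z - g11 W) * hy p = (g10 Z * hx p + g11 Z * hy p) - (g10 W * hx p + g11 W * hy p) by ring.
    by rewrite z2 w2 subrr.
  have -> : (g10 Z - g10 W) * hx q + (g11 Z - g11 W) * hy q = (g10 Z * hx q + g11 Z * hy q) - (g10 W * hx q + g11 W * hy q) by ring.
  by rewrite z4 w4 subrr.
apply: m2_ext; lra.
Qed.

Definition toTi (M : 'M[int]_2) : m2 := M2 (ent M 0 0) (ent M 0 1) (ent M 1 0) (ent M 1 1).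

Lemma sum2 (V : nmodType) (F : 'I_2 -> V) : \sum_(i < 2) F i = F 0 + F 1.
Proof. by rewrite big_ord_recl big_ord1; congr (_ + F _); apply/val_inj. Qed.

Lemma mulE2 (M N : 'M[int]_2) i j : (M * N) i j = M i 0 * N 0 j + M i 1 * N 1 j.
Proof. by rewrite -mulmxE mxE sum2. Qed.

Lemma toTi_mul (M N : 'M[int]_2) : toTi (M * N) = mul2 (toTi M) (toTi N).
Proof. by apply: m2_ext; rewrite /toTi /ent /= !mulE2 intrD !intrM. Qed.

Lemma toTi_mulmx (M N : 'M[int]_2) : toTi (M *m N) = mul2 (toTi M) (toTi N).
Proof. by rewrite mulmxE toTi_mul. Qed.

Lemma toTi_one : toTi 1 = id2.
Proof. by apply: m2_ext; rewrite /toTi /ent /= !mxE. Qed.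

Lemma toTi_phi A B w : toTi (phi A B w) = wordT (toTi A) (toTi B) w.
Proof.
elim: w => [|l w IH]; first by rewrite /phi big_nil toTi_one.
by rewrite /phi big_cons toTi_mul -/(phi A B w) IH; case: l.
Qed.

Lemma tr_int (M : 'M[int]_2) : ((\tr M)%:~R : R) = tr2 (toTi M).
Proof. by rewrite /mxtrace sum2 intrD. Qed.

Lemma trw_R A B w : ((trw A B w)%:~R : R) = tr2 (wordT (toTi A) (toTi B) w).
Proof. by rewrite /trw tr_int toTi_phi. Qed.

Lemma det22 (A : 'M[int]_2) : \det A = A 0 0 * A 1 1 - A 0 1 * A 1 0.
Proof.
rewrite (expand_det_row _ 0) sum2 /cofactor !det_mx11 !mxE /=.
have -> : lift 0 0 = 1 :> 'I_2 by apply/val_inj.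
have -> : lift 1 0 = 0 :> 'I_2 by apply/val_inj.
rewrite expr0 expr1; ring.
Qed.

Lemma det_int (A : 'M[int]_2) : \det A = 1 -> det2 (toTi A) = 1.
Proof. by move=> h; rewrite /det2 /toTi /ent /= -!intrM -intrB -det22 h. Qed.

Lemma toTi_inj (M N : 'M[int]_2) : toTi M = toTi N -> M = N.
Proof.
move=> e; apply/matrixP => i j.
have e00 := congr1 g00 e; have e01 := congr1 g01 e.
have e10 := congr1 g10 e; have e11 := congr1 g11 e.
rewrite /toTi /ent /= in e00 e01 e10 e11.
have I2 : forall k : 'I_2, k = 0 \/ k = 1.
  move=> [[|[|k]] hk]; [left | right | by []]; by apply/val_inj.
by case: (I2 i) => ->; case: (I2 j) => ->; apply: (@intr_inj R).
Qed.

Lemma toTi_inv (A : 'M[int]_2) : \det A = 1 -> toTi (invmx A) = adj2 (toTi A).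
Proof.
move=> h.
have hu : A \in unitmx by rewrite unitmxE h unitr1.
have e' : mul2 (toTi A) (toTi (invmx A)) = id2 by rewrite -toTi_mulmx (mulmxV hu) -toTi_one.
have dA := det_int _ h.
set X := toTi A in e' dA *; set Y := toTi (invmx A) in e' *.
have h00 := congr1 g00 e'; have h01 := congr1 g01 e'.
have h10 := congr1 g10 e'; have h11 := congr1 g11 e'.
move: h00 h01 h10 h11 dA; rewrite /mul2 /det2 /adj2 /= => h00 h01 h10 h11 dA.
apply: m2_ext => /=.
- transitivity (g11 X * (g00 X * g00 Y + g01 X * g10 Y) - g01 X * (g10 X * g00 Y + g11 X * g10 Y)).
    by rewrite -[LHS]mul1r -dA; ring.
  by rewrite h00 h10; ring.
- transitivity (g11 X * (g00 X * g01 Y + g01 X * g11 Y) - g01 X * (g10 X * g01 Y + g11 X * g11 Y)).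
    by rewrite -[LHS]mul1r -dA; ring.
  by rewrite h01 h11; ring.
- transitivity (- g10 X * (g00 X * g00 Y + g01 X * g10 Y) + g00 X * (g10 X * g00 Y + g11 X * g10 Y)).
    by rewrite -[LHS]mul1r -dA; ring.
  by rewrite h00 h10; ring.
- transitivity (- g10 X * (g00 X * g01 Y + g01 X * g11 Y) + g00 X * (g10 X * g01 Y + g11 X * g11 Y)).
    by rewrite -[LHS]mul1r -dA; ring.
  by rewrite h01 h11; ring.
Qed.

Lemma mob_T M p : mob M p = mobT (toTi M) p.
Proof. by case: p => [x|]; rewrite /mob /mobT /pt /toTi /= ?mulr1 ?mulr0 ?addr0. Qed.

Lemma size_ab ks : size (ab_word ks) = (sumn ks + size ks)%N.
Proof.
elim: ks => [|k ks IH] //=.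
rewrite /ab_word /= size_cat /= size_nseq -/(ab_word ks) IH.
by rewrite addnS addnA.
Qed.

Lemma hasA_ab ks : (1 <= size ks)%N -> hasA (ab_word ks).
Proof. by case: ks. Qed.

Lemma mainR (A B : 'M[int]_2) : \det A = 1 -> \det B = 1 ->
  mul2 (toTi A) (toTi B) <> mul2 (toTi B) (toTi A) ->
  coherently_oriented A B ->
  2 <= tr2 (toTi A) -> tr2 (toTi A) < tr2 (toTi B) ->
  tr2 (mul2 (toTi A) (toTi B)) <= tr2 (toTi B) ^+ 2 - 3 ->
  forall w, hasA w ->
  tr2 (wordT (toTi A) (toTi B) w) < tr2 (wordT (toTi A) (toTi B) (nseq (size w) Lb)).
Proof.
move=> hA hB hnc coh trA trAB hc w hw.
have dA := det_int _ hA; have dB := det_int _ hB.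
have iA := toTi_inv _ hA; have iB := toTi_inv _ hB.
case: coh => ap [am [bp [bm [[lA [hlA eA]] [[lA' [hlA' eA']] [[lB [hlB eB]] [[lB' [hlB' eB']] [IE1 IE2]]]]]]]].
set TA := toTi A in dA iA hnc trA trAB hc eA eA' *.
set TB := toTi B in dB iB hnc trAB hc eB eB' *.
change (eigT TA lA ap) in eA; change (eigT TA lA' am) in eA'.
change (eigT TB lB bp) in eB; change (eigT TB lB' bm) in eB'.
have trA0 : 0 < tr2 TA by lra.
have trB0 : 0 < tr2 TB by lra.
have pA := eig_pos _ _ _ dA eA trA0.
have pA' := eig_pos _ _ _ dA eA' trA0.
have pB := eig_pos _ _ _ dB eB trB0.
have pB' := eig_pos _ _ _ dB eB' trB0.
rewrite (gtr0_norm pB) in hlB.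
rewrite (gtr0_norm pB') in hlB'.
case: (eqVneq ap bp) => [eap|nap].
  have nam : am <> bm.
    move=> eam.
    case: (eqVneq ap am) => [e|ne].
      have eB2 : eigT TB lB' bp by rewrite -eap e eam.
      have ll := eig_same _ _ _ _ eB eB2.
      have l1 : lB = 1 by lra.
      have := eig_char _ _ _ dB eB; rewrite l1 expr1n mulr1 => c.
      clear -c trA trAB; lra.
    apply: hnc.
    have eB1 : eigT TB lB ap by rewrite eap.
    have eB2 : eigT TB lB' am by rewrite eam.
    have ne' : ap <> am by apply/eqP.
    apply: (eig_agree _ _ (lA * lB) (lA' * lB') _ _ ne').
    - exact: eig_mul.
    - by rewrite mulrC; apply: eig_mul.
    - exact: eig_mul.
    - by rewrite mulrC; apply: eig_mul.
  case: IE2 => [e|[I [hI [iIA iIB]]]]; first by exfalso; apply: nam.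
  have hlA0 : lA' != 0 by rewrite gt_eqF.
  have hlB0 : lB' != 0 by rewrite gt_eqF.
  have eX := eig_adj _ _ _ dA eA' hlA0.
  have eY := eig_adj _ _ _ dB eB' hlB0.
  have dX : det2 (adj2 TA) = 1 by rewrite det2_adj.
  have dY : det2 (adj2 TB) = 1 by rewrite det2_adj.
  have al0 : 0 < lA'^-1 by rewrite invr_gt0.
  have be1 : 1 <= lB'^-1 by rewrite invf_ge1.
  have iX : forall x, I x -> I (mobT (adj2 TA) x) by move=> x /iIA; rewrite mob_T -/TA iA.
  have iY : forall x, I x -> I (mobT (adj2 TB) x) by move=> x /iIB; rewrite mob_T -/TB iB.
  have t1 : 2 <= tr2 (adj2 TA) by rewrite tr2_adj.
  have t2 : tr2 (adj2 TA) < tr2 (adj2 TB) by rewrite !tr2_adj.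
  have t3 : tr2 (mul2 (adj2 TA) (adj2 TB)) <= tr2 (adj2 TB) ^+ 2 - 3.
    by rewrite -adj2_mul !tr2_adj tr2C.
  have hw' : hasA (rev w) by rewrite /hasA has_rev.
  have := NF _ _ _ _ _ _ I nam dX dY eX eY al0 be1 hI iX iY t1 t2 t3 (rev w) hw'.
  by rewrite size_rev -(rev_nseq (size w) Lb) -!wordT_adj !tr2_adj rev_nseq; apply.
case: IE1 => [e|[I [hI [iIA iIB]]]]; first by exfalso; move/eqP: nap; apply.
have hlB1 : 1 <= lB by [].
have nap' : ap <> bp by apply/eqP.
apply: (NF _ _ _ _ _ _ I nap' dA dB eA eB pA hlB1 hI) => //.
- by move=> x /iIA; rewrite mob_T.
- by move=> x /iIB; rewrite mob_T.
Qed.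

Theorem lemma5p6 (A B : 'M[int]_2) :
  SL2Z A -> SL2Z B -> A *m B != B *m A ->
  well_oriented A B ->
  2 <= \tr A -> \tr A < \tr B ->
  trw A B [:: La; Lb] < trw A B [:: Lb; Lb] ->
  forall ks : seq nat, (1 <= size ks)%N -> all (fun k => 1 <= k)%N ks ->
    trw A B (ab_word ks) < trw A B (nseq (sumn ks + size ks) Lb).
Proof.
move=> hA hB hnc [coh _] ha hab hc ks hks _.
rewrite -(ltr_int R) !trw_R -size_ab.
apply: mainR => //.
- move=> e; move/eqP: hnc; apply; apply: toTi_inj; by rewrite !toTi_mulmx.
- by have := ha; rewrite -(ler_int R) tr_int.
- by rewrite -!tr_int ltr_int.
- have := hc; rewrite -lezD1 -(ler_int R) intrD !trw_R /= !mul2_id => h.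
  have e : tr2 (mul2 (toTi B) (toTi B)) = tr2 (toTi B) ^+ 2 - 2 * det2 (toTi B).
    by rewrite /tr2 /det2 /mul2 /=; ring.
  have dB := det_int _ hB.
  have e1 : ((1:int)%:~R : R) = 1 by [].
  rewrite e1 e dB in h; lra.
- exact: hasA_ab.
Qed.
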